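(* Let $\Gamma$ be a group that is nilpotent of class $\le n$, let $S\subseteq\Gamma\setminus\{\mathbb{I}\}$ be a generating set, $G:=\mathrm{Cay}(\Gamma,S)$, and let $r\ge 2^{n+2}$ be an integer. Let $h\in S$ be such that $\{\mathbb{I},h\}$ is an $r$-local $2$-separator of $G$, suppose that $G$ has no $r$-local cutvertex, and suppose that $h$ is not an involution. Then there is no $g\in S$ such that $g$ traverses $\{\mathbb{I},h\}$ at $\mathbb{I}$, the word $gh^2$ strongly traverses $\{\mathbb{I},h\}$, and both words $g^{-1}h^2g^{-1}h^{-1}$ and $ghgh$ are morphemes of $\Gamma$ in $S$.
   Context: Generating sets are closed under inverses; $\mathrm{Cay}(\Gamma,S)$ is the simple graph on $\Gamma$ with edges $\{g,gs\}$. $a\equiv b$ means $a=b$ or $a=b^{-1}$; $\Gamma$ is nilpotent of class $\le n$ if $[g,h]_n=\mathbb{I}$ for all $g\not\equiv h$, where $[g,h]_1=gh^{-1}g^{-1}h$ and $[g,h]_n$ is the reduced form of $g[g,h]_{n-1}^{-1}g^{-1}[g,h]_{n-1}$. Ball $B_r(v)$: subgraph of all vertices and edges on closed walks of length $\le r$ through $v$; $v$ is an $r$-local cutvertex if $B_r(v)-v$ is disconnected. For $X=\{v_0,v_1\}$, $N(X)$ is the set of vertices outside $X$ adjacent to $X$; the connectivity graph $C_r(v_0,v_1)$ has vertex set $N(X)$, $a,b$ adjacent if for some $i$ they lie in the same component of $B_r(v_i)-v_0-v_1$; $X$ is an $r$-local $2$-separator if $C_r(v_0,v_1)$ is disconnected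 and $d_G(v_0,v_1)\le r/2$; the $r$-local components at $X$ are the components of $C_r(v_0,v_1)$. An element $g\in S$ traverses $X$ at $x\in X$ if the vertices $xg^{-1}$ and $xg$ lie in distinct $r$-local components at $X$. A traversal of $X$ is a walk whose ends lie in distinct $r$-local components at $X$ and whose internal vertices all lie in $X$; it is strong if it has exactly two internal vertices. A word $w=a_1\cdots a_k$ in $S$ strongly traverses $X$ if for some vertex $v$ the walk $v,va_1,\ldots,va_1\cdots a_k$ has a subwalk that is a strong traversal of $X$. A morpheme of $\Gamma$ in $S$ is a nonempty word in $S$ evaluating to $\mathbb{I}$ none of whose nonempty proper contiguous subwords evaluates to $\mathbb{I}$. *)

(* Defs.v *)
From Stdlib Require Import List Relations Arith.
Import ListNotations.
Set Implicit Arguments.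

Record Group := {
  carrier :> Type;
  mul : carrier -> carrier -> carrier;
  inv : carrier -> carrier;
  one : carrier;
  mulA : forall x y z, mul x (mul y z) = mul (mul x y) z;
  mul1g : forall x, mul one x = x;
  mulVg : forall x, mul (inv x) x = one
}.

Section Defs.
Variable G : Group.
Local Notation "x * y" := (mul G x y).
Local Notation "x ^-1" := (inv G x) (at level 3).
Local Notation e := (one G).

Definition equivg (a b : G) : Prop := a = b \/ a = b^-1.

(** itcomm k g h = [g,h]_{k+1};  [g,h]_1 = g h^-1 g^-1 h,
    [g,h]_{m+1} = g [g,h]_m^-1 g^-1 [g,h]_m  (evaluated in the group) *)
Fixpoint itcomm (k : nat) (g h : G) : G :=
  match k with
  | 0 => g * h^-1 * g^-1 * h
  | S k' => let c := itcomm k' g h in g * c^-1 * g^-1 * c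
  end.

Definition nilpotent_le (n : nat) : Prop :=
  forall g h : G, ~ equivg g h -> itcomm (n - 1) g h = e.

Definition eval (w : list G) : G := fold_right (fun a b => a * b) e w.

Definition generating (S : G -> Prop) : Prop :=
  (forall s, S s -> S s^-1) /\ forall x : G, exists w, Forall S w /\ eval w = x.

Definition cay_adj (S : G -> Prop) (x y : G) : Prop := exists s, S s /\ y = x * s.

Inductive is_walk (E : G -> G -> Prop) : list G -> Prop :=
| walk1 x : is_walk E [x]
| walkS x y p : E x y -> is_walk E (y :: p) -> is_walk E (x :: y :: p).

Definition closed_walk (E : G -> G -> Prop) (p : list G) : Prop :=
  is_walk E p /\ exists x, hd_error p = Some x /\ last p x = x.

Definition wlen (p : list G) : nat := length p - 1.

Definition ball_walk (S : G -> Prop) (r : nat) (v : G) (p : list G) : Prop :=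
  closed_walk (cay_adj S) p /\ wlen p <= r /\ In v p.

Definition ballV (S : G -> Prop) (r : nat) (v u : G) : Prop :=
  exists p, ball_walk S r v p /\ In u p.

Definition ballE (S : G -> Prop) (r : nat) (v a b : G) : Prop :=
  exists p, ball_walk S r v p /\
    exists l1 l2, p = l1 ++ a :: b :: l2 \/ p = l1 ++ b :: a :: l2.

Definition ballV_minus (S : G -> Prop) (r : nat) (v : G) (Z : G -> Prop) (u : G) :=
  ballV S r v u /\ ~ Z u.

Definition ballE_minus (S : G -> Prop) (r : nat) (v : G) (Z : G -> Prop) (a b : G) :=
  ballE S r v a b /\ ~ Z a /\ ~ Z b.

Definition same_comp (V : G -> Prop) (E : G -> G -> Prop) (a b : G) : Prop :=
  V a /\ V b /\ clos_refl_trans G (fun x y => V x /\ V y /\ E x y) a b.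

Definition local_cutvertex (S : G -> Prop) (r : nat) (v : G) : Prop :=
  let V := ballV_minus S r v (fun z => z = v) in
  let E := ballE_minus S r v (fun z => z = v) in
  exists a b, V a /\ V b /\ ~ same_comp V E a b.

Definition inX (v0 v1 z : G) : Prop := z = v0 \/ z = v1.

Definition nbhd (S : G -> Prop) (v0 v1 u : G) : Prop :=
  ~ inX v0 v1 u /\ (cay_adj S v0 u \/ cay_adj S v1 u).

Definition C_adj (S : G -> Prop) (r : nat) (v0 v1 a b : G) : Prop :=
  nbhd S v0 v1 a /\ nbhd S v0 v1 b /\
  exists vi, inX v0 v1 vi /\
    same_comp (ballV_minus S r vi (inX v0 v1)) (ballE_minus S r vi (inX v0 v1)) a b.

Definition C_conn (S : G -> Prop) (r : nat) (v0 v1 a b : G) : Prop :=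
  nbhd S v0 v1 a /\ nbhd S v0 v1 b /\ clos_refl_trans G (C_adj S r v0 v1) a b.

Definition distinct_comp (S : G -> Prop) (r : nat) (v0 v1 a b : G) : Prop :=
  nbhd S v0 v1 a /\ nbhd S v0 v1 b /\ ~ C_conn S r v0 v1 a b.

Definition dist_le_half (S : G -> Prop) (r : nat) (v0 v1 : G) : Prop :=
  exists p, is_walk (cay_adj S) (v0 :: p) /\ last (v0 :: p) v0 = v1 /\ 2 * length p <= r.

Definition local_2sep (S : G -> Prop) (r : nat) (v0 v1 : G) : Prop :=
  (exists a b, nbhd S v0 v1 a /\ nbhd S v0 v1 b /\ ~ C_conn S r v0 v1 a b)
  /\ dist_le_half S r v0 v1.

Definition traverses_at (S : G -> Prop) (r : nat) (v0 v1 g x : G) : Prop :=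
  distinct_comp S r v0 v1 (x * g^-1) (x * g).

Fixpoint word_walk (v : G) (w : list G) : list G :=
  match w with
  | [] => [v]
  | a :: w' => v :: word_walk (v * a) w'
  end.

Definition strong_traversal (S : G -> Prop) (r : nat) (v0 v1 : G) (q : list G) : Prop :=
  exists a x y b, q = [a; x; y; b] /\ is_walk (cay_adj S) q /\
    inX v0 v1 x /\ inX v0 v1 y /\ distinct_comp S r v0 v1 a b.

Definition strongly_traverses (S : G -> Prop) (r : nat) (v0 v1 : G) (w : list G) : Prop :=
  exists v l1 q l2, word_walk v w = l1 ++ q ++ l2 /\ strong_traversal S r v0 v1 q.

Definition morpheme (S : G -> Prop) (w : list G) : Prop :=
  w <> [] /\ Forall S w /\ eval w = e /\
  forall l1 m l2, w = l1 ++ m ++ l2 -> m <> [] -> (l1 <> [] \/ l2 <> []) -> eval m <> e.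

End Defs.

Arguments generating {G} S.
Arguments local_2sep {G} S r v0 v1.
Arguments local_cutvertex {G} S r v.
Arguments traverses_at {G} S r v0 v1 g x.
Arguments strongly_traverses {G} S r v0 v1 w.
Arguments morpheme {G} S w.

(* Main.v *)
Require Import Defs.
From Stdlib Require Import List Arith Lia Relations.
Import ListNotations.

Section Alg.
Context {G : Group}.
Local Notation "x * y" := (mul G x y).
Local Notation "x ^-1" := (inv G x) (at level 3).
Local Notation e := (one G).

Ltac ra := repeat rewrite <- (mulA G).

Lemma mulKg (x y : G) : x^-1 * (x * y) = y.
Proof. rewrite mulA, mulVg, mul1g. reflexivity. Qed.

Lemma mulgV (x : G) : x * x^-1 = e.
Proof.
  rewrite <- (mul1g G (x * x^-1)).
  rewrite <- (mulVg G (x^-1)) at 1.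
  ra. rewrite (mulA G (x^-1) x (x^-1)), (mulVg G x), (mul1g G (x^-1)).
  rewrite mulVg. reflexivity.
Qed.

Lemma mulg1 (x : G) : x * e = x.
Proof. rewrite <- (mulVg G x), mulA, mulgV, mul1g. reflexivity. Qed.

Lemma mulKVg (x y : G) : x * (x^-1 * y) = y.
Proof. rewrite mulA, mulgV, mul1g. reflexivity. Qed.

Lemma invgK (x : G) : (x^-1)^-1 = x.
Proof. rewrite <- (mulg1 ((x^-1)^-1)), <- (mulVg G x), mulKg. reflexivity. Qed.

Lemma mul_eq1 (x y : G) : x * y = e -> y = x^-1.
Proof. intro H. rewrite <- (mulKg x y), H, mulg1. reflexivity. Qed.

Lemma invMg (x y : G) : (x * y)^-1 = y^-1 * x^-1.
Proof.
  symmetry. apply mul_eq1. ra. rewrite mulKVg, mulgV. reflexivity.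
Qed.

Lemma inv1 : e^-1 = e.
Proof. rewrite <- (mulVg G e) at 2. rewrite mulg1. reflexivity. Qed.

Lemma mulIg (x y z : G) : x * y = x * z -> y = z.
Proof. intro H. rewrite <- (mulKg x y), H, mulKg. reflexivity. Qed.

Lemma comm_l (x y z : G) : x * y = y * x -> x^-1 * (y * z) = y * (x^-1 * z).
Proof.
  intro H. apply (mulIg x). rewrite mulKVg, mulA, H, <- mulA, mulKVg. reflexivity.
Qed.

Fixpoint gpow (x : G) (k : nat) : G :=
  match k with 0 => e | S k => x * gpow x k end.

Lemma gpow_comm (x : G) k : x * gpow x k = gpow x k * x.
Proof.
  induction k; simpl. rewrite mulg1, mul1g; reflexivity.
  rewrite <- mulA, <- IHk. reflexivity.
Qed.

Context {g h : G}.
Hypothesis Rhgh : h * (g * h) = g^-1.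
Hypothesis Rhh : h * h = h^-1.

Lemma Rh3 (y : G) : h * (h * (h * y)) = y.
Proof. rewrite mulA, Rhh, mulKg. reflexivity. Qed.

Lemma Rkey (y : G) : h * (g^-1 * (h^-1 * y)) = h^-1 * (g * y).
Proof.
  rewrite <- Rhgh, <- Rhh. ra. rewrite Rh3. reflexivity.
Qed.

Definition Q k := (gpow g k)^-1 * (((g * g) * h^-1) * gpow g k).

Lemma itcomm_Q k : itcomm G k g h = Q k.
Proof.
  induction k as [|k IH]; unfold Q in *; simpl.
  - rewrite inv1, mul1g, mulg1. rewrite <- Rhgh. ra. rewrite mulKg, Rhh. reflexivity.
  - rewrite IH. set (P := gpow g k).
    rewrite !invMg, !invgK. ra.
    assert (HP : P * (g^-1 * (P^-1 * (g * (g * (h^-1 * P))))) = g^-1 * (g * (g * (h^-1 * P)))).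
    { assert (Hc : g * P = P * g) by apply gpow_comm.
      rewrite <- (comm_l g P _ Hc). rewrite mulKVg. reflexivity. }
    rewrite HP, !mulKg.
    assert (Hc : g * P^-1 = P^-1 * g).
    { assert (Hc : P * g = g * P) by (symmetry; apply gpow_comm).
      pose proof (comm_l P g e Hc) as H. rewrite !mulg1 in H. symmetry. exact H. }
    rewrite mulA, Hc, <- mulA. f_equal. rewrite Rkey. reflexivity.
Qed.

End Alg.

Theorem proposition7p1 (Gam : Group) (n : nat) (S : Gam -> Prop) (r : nat) (h : Gam) :
  1 <= n ->
  nilpotent_le Gam n ->
  (forall s, S s -> s <> one Gam) ->
  generating S ->
  2 ^ (n + 2) <= r ->
  S h ->
  local_2sep S r (one Gam) h ->
  (forall v : Gam, ~ local_cutvertex S r v) ->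
  mul Gam h h <> one Gam ->
  ~ (exists g, S g /\
       traverses_at S r (one Gam) h g (one Gam) /\
       strongly_traverses S r (one Gam) h [g; h; h] /\
       morpheme S [inv Gam g; h; h; inv Gam g; inv Gam h] /\
       morpheme S [g; h; g; h]).
Proof.
  intros Hn Hnil HS [Hinv _] Hr Sh _ _ Hhh [g [Sg [Htrav [_ [[_ [_ [E2 _]]] [_ [_ [E1 M1]]]]]]]].
  set (G := Gam) in *.
  simpl in E1, E2. rewrite mulg1 in E1, E2.
  assert (gh1 : mul G g (mul G h (one G)) <> one G).
  { apply (M1 [] [g; h] [g; h]); [reflexivity|discriminate|right; discriminate]. }
  rewrite mulg1 in gh1.
  assert (Hg1 : g <> one G) by (apply HS; exact Sg).
  assert (Hh1 : h <> one G) by (apply HS; exact Sh).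
  assert (Rhgh : mul G h (mul G g h) = inv G g).
  { apply mul_eq1. exact E1. }
  assert (E2' : mul G h (mul G h (mul G (inv G g) (inv G h))) = g).
  { rewrite <- (invgK g) at 2. apply mul_eq1. exact E2. }
  assert (Rh3 : mul G h (mul G h h) = one G).
  { rewrite <- Rhgh in E2'. rewrite <- !(mulA G) in E2'.
    rewrite mulgV, mulg1 in E2'.
    rewrite !(mulA G) in E2'. rewrite <- (mul1g G g) in E2' at 2.
    apply (f_equal (fun z => mul G z (inv G g))) in E2'.
    rewrite <- !(mulA G), mulgV, !mulg1 in E2'. exact E2'. }
  assert (Rhh : mul G h h = inv G h).
  { apply mul_eq1. exact Rh3. }
  assert (Hne : ~ equivg G g h).
  { intros [Eq|Eq].
    - subst g. apply Hh1. rewrite Rh3, mulg1 in E1. exact E1.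
    - apply gh1. rewrite Eq. apply mulVg. }
  pose proof (Hnil g h Hne) as Hc.
  rewrite (itcomm_Q Rhgh Rhh) in Hc. unfold Q in Hc.
  apply mul_eq1 in Hc. rewrite invgK in Hc.
  assert (Hgg : mul G (mul G g g) (inv G h) = one G).
  { rewrite <- (mulg1 (mul G (mul G g g) (inv G h))).
    rewrite <- (mulgV (gpow g (n-1))), (mulA G), Hc, mulgV. reflexivity. }
  assert (Hh : mul G g g = h).
  { rewrite <- (mulg1 (mul G g g)), <- (mulVg G h), (mulA G), Hgg, mul1g. reflexivity. }
  assert (Key : mul G (mul G g h) h = inv G g).
  { apply mul_eq1. rewrite <- !(mulA G). rewrite (mulA G g g), Hh. exact Rh3. }
  assert (Hgh : g <> h).
  { intro Eq. apply Hg1. rewrite <- Eq in Hh.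
    rewrite <- (mulg1 g) in Hh at 3. apply mulIg in Hh. exact Hh. }
  assert (Hgh2 : mul G g h <> h).
  { intro Eq. apply Hg1. rewrite <- (mulg1 g), <- (mulgV h), (mulA G), Eq, mulgV. reflexivity. }
  assert (Hgi1 : inv G g <> one G).
  { intro Eq. apply Hg1. rewrite <- (invgK g), Eq, inv1. reflexivity. }
  assert (Hgi2 : inv G g <> h).
  { intro Eq. apply gh1. rewrite <- Eq. apply mulgV. }
  assert (Sgi : S (inv G g)) by (apply Hinv; exact Sg).
  assert (H4 : 4 <= r).
  { rewrite Nat.pow_add_r in Hr. pose proof (Nat.pow_nonzero 2 n ltac:(lia)). simpl in Hr. lia. }
  set (p := [one G; g; mul G g h; inv G g; one G]).
  assert (Hbw : ball_walk G S r (one G) p).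
  { split; [split|split].
    - unfold p. constructor. exists g; split; [exact Sg| symmetry; apply mul1g].
      constructor. exists h; split; [exact Sh|reflexivity].
      constructor. exists h; split; [exact Sh|symmetry; exact Key].
      constructor. exists g; split; [exact Sg|symmetry; apply mulVg].
      constructor.
    - exists (one G). split; reflexivity.
    - unfold p, wlen. simpl. lia.
    - unfold p. simpl. left. reflexivity. }
  unfold traverses_at, distinct_comp in Htrav.
  rewrite !mul1g in Htrav.
  destruct Htrav as [Nb1 [Nb2 Hnc]]. apply Hnc.
  split; [exact Nb1|split; [exact Nb2|]].
  apply rt_step. split; [exact Nb1|split; [exact Nb2|]].
  exists (one G). split; [left; reflexivity|].
  assert (HV : forall u, In u p -> ~ inX G (one G) h u ->
            ballV_minus G S r (one G) (inX G (one G) h) u).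
  { intros u Hu Hx. split; [exists p; split; assumption | exact Hx]. }
  assert (X1 : ~ inX G (one G) h (inv G g)) by (intros [E|E]; auto).
  assert (X2 : ~ inX G (one G) h g) by (intros [E|E]; auto).
  assert (X3 : ~ inX G (one G) h (mul G g h)) by (intros [E|E]; auto).
  assert (V1 := HV (inv G g) ltac:(unfold p; simpl; tauto) X1).
  assert (V2 := HV g ltac:(unfold p; simpl; tauto) X2).
  assert (V3 := HV (mul G g h) ltac:(unfold p; simpl; tauto) X3).
  split; [exact V1|split; [exact V2|]].
  apply rt_trans with (mul G g h); apply rt_step;
    (split; [assumption|split; [assumption|split; [|split; assumption]]]);
    exists p; (split; [exact Hbw|]).
  - exists [one G; g], [one G]. right. unfold p. reflexivity.
  - exists [one G], [inv G g; one G]. right. unfold p. reflexivity.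
Qed.
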